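(* Let $R$ be a commutative associative unital ring and $B$ a central $R$-algebra. Assume that $\beta$ is an invariant $R$-bilinear form on $B$ which is nonsingular and satisfies $\beta(B,B)=R$, and that the $R$-module $\mathbf{IBF}_R(B)$ is projective. Then $(B,\beta)$ satisfies the IBF-principle, i.e. the map $\bar\beta\colon\mathbf{IBF}_R(B)\to R$, $\overline{a\otimes b}\mapsto\beta(a,b)$, is an isomorphism of $R$-modules.
   Context: An $R$-algebra is an $R$-module with an $R$-bilinear product (no identities assumed). $\beta$ is invariant if $\beta(ab,c)=\beta(a,bc)=\beta(b,ca)$ for all $a,b,c\in B$; nonsingular if $b\mapsto\beta(b,-)$ is a bijection $B\to\mathrm{Hom}_R(B,R)$. $\beta(B,B)$ denotes the $R$-span of the values $\beta(a,b)$. The centroid is $\mathrm{Cent}_R(B)=\{\chi\in\mathrm{End}_R(B):\chi(ab)=a\chi(b)=\chi(a)b\ \forall a,b\}$, and $B$ is central if the map $R\to\mathrm{Cent}_R(B)$, $r\mapsto(b\mapsto rb)$, is an isomorphism. $\mathbf{IBF}_R(B)$ is the quotient of $B\otimes_R B$ by the $R$-submodule spanned by all $ab\otimes c-a\otimes bc$ and $ab\otimes c-b\otimes ca$, and $\overline{a\otimes b}$ denotes the class of $a\otimes b$. *)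

(* Defs.v *)
From HB Require Import structures.
From Stdlib Require Import ClassicalEpsilon.
From mathcomp Require Import all_boot all_algebra generic_quotient.
From mathcomp.multinomials Require Import freeg.

Set Implicit Arguments.
Unset Strict Implicit.
Unset Printing Implicit Defensive.

Import GRing.Theory.
Local Open Scope ring_scope.
Local Open Scope quotient_scope.

Definition pbool (P : Prop) : bool :=
  if excluded_middle_informative P then true else false.

Lemma pboolP (P : Prop) : reflect P (pbool P).
Proof. by rewrite /pbool; case: excluded_middle_informative => h; constructor. Qed.

Definition is_submodule (R : nzRingType) (V : lmodType R) (P : V -> Prop) :=
  P 0 /\ forall (r : R) (u v : V), P u -> P v -> P (r *: u + v).

Definition span_mod (R : nzRingType) (V : lmodType R) (G : V -> Prop) (x : V) : Prop :=
  forall P : V -> Prop, is_submodule P -> (forall g, G g -> P g) -> P x.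

Section ModQuotient.
Variables (R : nzRingType) (V : lmodType R) (G : V -> Prop).

Definition spanb : pred V := fun x => pbool (span_mod G x).

Lemma spanbP x : reflect (span_mod G x) (spanb x).
Proof. exact: pboolP. Qed.

Lemma spanb_submod : submod_closed spanb.
Proof.
split.
  by apply/spanbP => P [P0 _] _.
move=> r u v /spanbP hu /spanbP hv; apply/spanbP => P hP hG.
by case: (hP) => _ hD; apply: hD; [apply: hu | apply: hv].
Qed.

HB.instance Definition _ := GRing.isSubmodClosed.Build R V spanb spanb_submod.

Definition modq_equiv (x y : V) := (x - y) \in spanb.

Lemma modq_refl (x : V) : modq_equiv x x.
Proof. by rewrite /modq_equiv subrr rpred0. Qed.
Lemma modq_sym (x y : V) : modq_equiv x y = modq_equiv y x.
Proof. by rewrite /modq_equiv -opprB rpredN. Qed.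
Lemma modq_trans (y x z : V) : modq_equiv x y -> modq_equiv y z -> modq_equiv x z.
Proof. by rewrite /modq_equiv => h1 h2; rewrite -[x](addrNK y) -addrA rpredD. Qed.

Lemma modq_equiv_is_equiv : equiv_class_of modq_equiv.
Proof. split; [exact: modq_refl | exact: modq_sym | exact: modq_trans]. Qed.

Canonical modq_equiv_equiv := EquivRelPack modq_equiv_is_equiv.
Canonical modq_equiv_encModRel := defaultEncModRel modq_equiv.

Definition modq := {eq_quot modq_equiv}.
HB.instance Definition _ : EqQuotient V modq_equiv modq := EqQuotient.on modq.
HB.instance Definition _ := Choice.on modq.

Lemma modqBE x y : (x - y \in spanb) = (x == y %[mod modq]).
Proof. by rewrite piE. Qed.

Definition mq_zero : modq := lift_cst modq 0.
Definition mq_add := lift_op2 modq +%R.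
Definition mq_opp := lift_op1 modq -%R.
Fact mq_scale_key : unit. Proof. by []. Qed.
Definition mq_scale : R -> modq -> modq :=
  locked_with mq_scale_key (fun r (x : modq) => \pi_modq (r *: repr x)).
Canonical mq_scale_unlockable := [unlockable fun mq_scale].

Canonical mq_pi_zero_morph := PiConst mq_zero.

Lemma mq_pi_opp : {morph \pi_modq : x / - x >-> mq_opp x}.
Proof.
move=> x; unlock mq_opp; apply/eqP; rewrite piE /modq_equiv.
by rewrite -opprD rpredN modqBE reprK.
Qed.
Canonical mq_pi_opp_morph := PiMorph1 mq_pi_opp.

Lemma mq_pi_add : {morph \pi_modq : x y / x + y >-> mq_add x y}.
Proof.
move=> x y /=; unlock mq_add; apply/eqP; rewrite piE /modq_equiv.
rewrite opprD addrACA rpredD //.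
  by rewrite modqBE reprK.
by rewrite modqBE reprK.
Qed.
Canonical mq_pi_add_morph := PiMorph2 mq_pi_add.

Lemma mq_pi_scale r : {morph \pi_modq : x / r *: x >-> mq_scale r x}.
Proof.
move=> x; rewrite [mq_scale]unlock; apply/eqP; rewrite piE /modq_equiv.
by rewrite -scalerBr rpredZ // modqBE reprK.
Qed.

Lemma mq_addA : associative mq_add.
Proof. by move=> x y z; rewrite -[x]reprK -[y]reprK -[z]reprK !piE addrA. Qed.
Lemma mq_addC : commutative mq_add.
Proof. by move=> x y; rewrite -[x]reprK -[y]reprK !piE addrC. Qed.
Lemma mq_add0 : left_id mq_zero mq_add.
Proof. by move=> x; rewrite -[x]reprK !piE add0r. Qed.
Lemma mq_addN : left_inverse mq_zero mq_opp mq_add.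
Proof. by move=> x; rewrite -[x]reprK !piE addNr. Qed.

HB.instance Definition _ := GRing.isZmodule.Build modq mq_addA mq_addC mq_add0 mq_addN.

Lemma mq_scaleE r (v : V) : mq_scale r (\pi_modq v) = \pi_modq (r *: v).
Proof. by rewrite mq_pi_scale. Qed.

Lemma mq_scaleA a b (x : modq) : mq_scale a (mq_scale b x) = mq_scale (a * b) x.
Proof. by elim/quotW: x => v; rewrite !mq_scaleE scalerA. Qed.
Lemma mq_scale1 (x : modq) : mq_scale 1 x = x.
Proof. by elim/quotW: x => v; rewrite !mq_scaleE scale1r. Qed.
Lemma mq_scaleDr a (x y : modq) : mq_scale a (x + y) = mq_scale a x + mq_scale a y.
Proof.
elim/quotW: x => v; elim/quotW: y => w.
have -> : \pi_modq v + \pi_modq w = \pi_modq (v + w) :> modq by rewrite mq_pi_add.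
by rewrite !mq_scaleE scalerDr mq_pi_add.
Qed.
Lemma mq_scaleDl (x : modq) a b : mq_scale (a + b) x = mq_scale a x + mq_scale b x.
Proof. by elim/quotW: x => v; rewrite !mq_scaleE scalerDl mq_pi_add. Qed.

HB.instance Definition _ := GRing.Zmodule_isLmodule.Build R modq
  mq_scaleA mq_scale1 mq_scaleDr mq_scaleDl.

End ModQuotient.

Section Algebra.
Variables (R : comNzRingType) (B : lmodType R).

Definition bilinear_map (M : lmodType R) (f : B -> B -> M) : Prop :=
  (forall a, linear (f a)) /\ (forall b, linear (fun a => f a b)).

Variable mul : B -> B -> B.

Definition invariant_form (beta : B -> B -> R^o) : Prop :=
  forall a b c, beta (mul a b) c = beta a (mul b c) /\
                beta a (mul b c) = beta b (mul c a).

(* b |-> beta(b,-) is a bijection B -> Hom_R(B,R) *)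
Definition nonsingular_form (beta : B -> B -> R^o) : Prop :=
  (forall b1 b2, (forall x, beta b1 x = beta b2 x) -> b1 = b2) /\
  (forall f : {linear B -> R^o}, exists b, forall x, beta b x = f x).

(* beta(B,B) = R : the R-span of the values of beta is all of R *)
Definition form_values_span_R (beta : B -> B -> R^o) : Prop :=
  forall r : R, exists s : seq (R * (B * B)),
    r = \sum_(t <- s) t.1 * beta t.2.1 t.2.2.

Definition in_centroid (chi : B -> B) : Prop :=
  linear chi /\ forall a b, chi (mul a b) = mul a (chi b) /\ chi (mul a b) = mul (chi a) b.

(* B is central: r |-> (b |-> r b) is an isomorphism R -> Cent_R(B) *)
Definition central_algebra : Prop :=
  (forall r1 r2 : R, (forall b : B, r1 *: b = r2 *: b) -> r1 = r2) /\
  (forall chi, in_centroid chi -> exists r : R, forall b, chi b = r *: b).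

(* the free R-module on B x B; x (x) y is represented by the generator (x,y) *)
Definition freeBB := {freeg (B * B)%type / R}.
Definition gen (x y : B) : freeBB := << (x, y) >>.

(* relations: R-bilinearity (giving B (x)_R B) and invariance *)
Definition ibf_rel (u : freeBB) : Prop :=
  (exists r x x' y, u = gen (r *: x + x') y - (r *: gen x y + gen x' y)) \/
  (exists r x y y', u = gen x (r *: y + y') - (r *: gen x y + gen x y')) \/
  (exists a b c, u = gen (mul a b) c - gen a (mul b c)) \/
  (exists a b c, u = gen (mul a b) c - gen b (mul c a)).

(* IBF_R(B) = (B (x)_R B) / < ab(x)c - a(x)bc, ab(x)c - b(x)ca > *)
Definition IBF : lmodType R := modq ibf_rel.

Definition ibf_class (x y : B) : IBF := \pi_(modq ibf_rel) (gen x y).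

Definition ibf_beta (beta : B -> B -> R^o) (z : IBF) : R :=
  fglift (fun p : B * B => beta p.1 p.2) (repr z).

End Algebra.

Arguments IBF {R B} mul.
Arguments ibf_class {R B} mul x y.
Arguments ibf_beta {R B} mul beta z.
Arguments ibf_rel {R B} mul u.
Arguments in_centroid {R B} mul chi.
Arguments central_algebra {R B} mul.
Arguments invariant_form {R B} mul beta.

Definition projective_module (R : comNzRingType) (P : lmodType R) : Prop :=
  forall (M N : lmodType R) (g : {linear M -> N}) (f : {linear P -> N}),
    (forall n, exists m, g m = n) ->
    exists h : {linear P -> M}, forall p, g (h p) = f p.

(* Main.v *)
Require Import Defs.
From Stdlib Require Import ClassicalEpsilon.
From HB Require Import structures.
From mathcomp Require Import all_boot all_algebra generic_quotient.
From mathcomp.multinomials Require Import freeg.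
Import GRing.Theory.
Local Open Scope ring_scope.
Local Open Scope quotient_scope.

Section MkLin.
Variables (R : comNzRingType) (U V : lmodType R) (f : U -> V) (hf : linear f).
Definition mkl (h : linear f) := f.
HB.instance Definition _ := GRing.isLinear.Build R U V *:%R (mkl hf) hf.
End MkLin.
Arguments mkl {R U V f} h.


Section Freeg.
Variables (R : comNzRingType) (K : choiceType).
Lemma freeg_indP (P : {freeg K / R} -> Prop) :
  P 0 -> (forall u v, P u -> P v -> P (u + v)) -> (forall k x, P << k *g x >>) ->
  forall D, P D.
Proof.
move=> P0 PD PU D; rewrite -(freeg_sumE D); elim: (dom D) => [|z s IH].
  by rewrite big_nil.
by rewrite big_cons; apply: PD.
Qed.

Lemma freegZU c k x : c *: << k *g x >> = << (c * k) *g x >> :> {freeg K / R}.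
Proof. by apply/eqP/freeg_eqP => y; rewrite coeffZ !coeffU mulrA. Qed.

HB.instance Definition _ (M : lmodType R) (f : K -> M) :=
  GRing.isAdditive.Build {freeg K / R} M (fglift f) (lift_is_additive f).

Lemma fglift_linear (M : lmodType R) (f : K -> M) : linear (fglift f).
Proof.
move=> c u v; rewrite raddfD /=; congr (_ + _).
elim/freeg_indP: u => [|u1 u2 hu hv|k x].
- by rewrite scaler0 raddf0 scaler0.
- transitivity (fglift f (c *: u1) + fglift f (c *: u2)); last by rewrite hu hv raddfD scalerDr.
  by rewrite -raddfD scalerDr.
- by rewrite freegZU !liftU scalerA.
Qed.
End Freeg.

Section Main.
Variables (R : comNzRingType) (B : lmodType R) (mul : B -> B -> B) (beta : B -> B -> R^o).
Hypotheses (hbeta : bilinear_map beta) (hinv : invariant_form mul beta).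

Local Notation F := (freeBB B).
Local Notation Q := (IBF mul).

Definition pi (u : F) : Q := \pi_(modq (ibf_rel mul)) u.

Lemma pi_linear : linear pi.
Proof. by move=> r u v; rewrite /pi mq_pi_add mq_pi_scale. Qed.

HB.instance Definition _ := GRing.isLinear.Build R F Q *:%R pi pi_linear.

Lemma pi_surj (z : Q) : pi (repr z) = z.
Proof. exact: reprK. Qed.

Lemma rel_eq u v : ibf_rel mul (u - v) -> pi u = pi v.
Proof.
move=> h; apply/eqP; rewrite -subr_eq0 -raddfB; apply/eqP.
have -> : (0 : Q) = pi 0 by rewrite raddf0.
apply/eqP; rewrite /pi -modqBE subr0; apply/spanbP => P hP hG; exact: hG.
Qed.

Definition L := fglift (fun p : B * B => beta p.1 p.2 : R^o).

Lemma L_lin : linear L.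
Proof. exact: fglift_linear. Qed.

Lemma Lgen x y : L (gen x y) = beta x y.
Proof. by rewrite /L /gen liftU scale1r. Qed.

Lemma LD u v : L (u + v) = L u + L v.
Proof. exact: raddfD. Qed.
Lemma L0 : L 0 = 0.
Proof. exact: raddf0. Qed.
Lemma LB u v : L (u - v) = L u - L v.
Proof. exact: raddfB. Qed.
Lemma LZ r u : L (r *: u) = r * L u.
Proof. by have := L_lin r u 0; rewrite !addr0 L0 addr0. Qed.

Lemma L_span u : span_mod (ibf_rel mul) u -> L u = 0.
Proof.
move=> hu; apply: (hu (fun u => L u = 0)).
  by split; [exact: L0 | move=> r a b ha hb; rewrite L_lin ha hb scaler0 addr0].
move=> g [[r [x [x' [y ->]]]]|[[r [x [y [y' ->]]]]|[[a [b [c ->]]]|[a [b [c ->]]]]]];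
  rewrite LB ?LD ?LZ !Lgen.
- by rewrite (hbeta.2 y) subrr.
- by rewrite (hbeta.1 x) subrr.
- by rewrite (hinv a b c).1 subrr.
- by rewrite (hinv a b c).1 (hinv a b c).2 subrr.
Qed.

Lemma L_pi u : ibf_beta mul beta (pi u) = L u.
Proof.
rewrite /ibf_beta; apply/eqP; rewrite -subr_eq0; apply/eqP.
change (L (repr (pi u)) - L u = 0); rewrite -LB; apply: L_span.
move: (modqBE (ibf_rel mul) (repr (pi u)) u); rewrite reprK /pi eqxx => h; apply/spanbP; exact: h.
Qed.

Lemma classL r x x' y :
  ibf_class mul (r *: x + x') y = r *: ibf_class mul x y + ibf_class mul x' y.
Proof.
rewrite /ibf_class -/(pi _) -/(pi _) -/(pi _) -linearP.
by apply: rel_eq; left; exists r, x, x', y.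
Qed.

Lemma classR r x y y' :
  ibf_class mul x (r *: y + y') = r *: ibf_class mul x y + ibf_class mul x y'.
Proof.
rewrite /ibf_class -/(pi _) -/(pi _) -/(pi _) -linearP.
by apply: rel_eq; right; left; exists r, x, y, y'.
Qed.

Lemma classI1 a b c : ibf_class mul (mul a b) c = ibf_class mul a (mul b c).
Proof. by apply: rel_eq; right; right; left; exists a, b, c. Qed.

Lemma classI2 a b c : ibf_class mul (mul a b) c = ibf_class mul b (mul c a).
Proof. by apply: rel_eq; right; right; right; exists a, b, c. Qed.

Hypotheses (hcent : central_algebra mul) (hns : nonsingular_form beta).

Lemma key (phi : {linear Q -> R^o}) :
  exists r : R, forall z, phi z = r * ibf_beta mul beta z.
Proof.
have fa_lin a : linear (fun x => phi (ibf_class mul a x) : R^o).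
  by move=> r x y; rewrite classR linearP.
pose chi a := proj1_sig (constructive_indefinite_description _ (hns.2 (mkl (fa_lin a)))).
have chiP a x : beta (chi a) x = phi (ibf_class mul a x).
  exact: (proj2_sig (constructive_indefinite_description _ (hns.2 (mkl (fa_lin a)))) x).
have hchi : in_centroid mul chi.
  split.
    move=> r a a'; apply: hns.1 => x.
    rewrite (hbeta.2 x) !chiP classL linearP.
    done.
  move=> a b; split; apply: hns.1 => c.
    rewrite chiP classI2 -chiP -(hinv a (chi b) c).2 (hinv a (chi b) c).1.
    done.
  by rewrite chiP classI1 -chiP (hinv (chi a) b c).1.
have [r hr] := hcent.2 chi hchi.
exists r.
have hcl a x : phi (ibf_class mul a x) = r * beta a x.
  by rewrite -chiP hr; exact: (linearZZ (mkl (hbeta.2 x)))...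
move=> z; rewrite -(pi_surj z) L_pi; elim/freeg_indP: (repr z) => [|u v hu hv|k x].
- by rewrite !raddf0 L0 mulr0.
- by rewrite !raddfD /= hu hv LD mulrDr.
- have -> : << k *g x >> = k *: gen x.1 x.2 :> F by rewrite /gen freegZU mulr1; case: x.
  rewrite LZ Lgen !linearZZ.
  change (k * phi (ibf_class mul x.1 x.2) = r * (k * beta x.1 x.2)).
  by rewrite hcl mulrCA.
Qed.

Hypotheses (hspan : form_values_span_R beta) (hproj : projective_module Q).

Lemma part1 x y : ibf_beta mul beta (ibf_class mul x y) = beta x y.
Proof. exact: (L_pi (gen x y)) || (rewrite (L_pi (gen x y)); exact: Lgen). Qed.

Lemma part2 : linear (ibf_beta mul beta : Q -> R^o).
Proof.
move=> r z1 z2; rewrite -(pi_surj z1) -(pi_surj z2) -linearP !L_pi.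
exact: L_lin.
Qed.

Lemma id_lin : linear (fun z : Q => z). Proof. by []. Qed.

Lemma part3 : bijective (ibf_beta mul beta).
Proof.
have surj : forall n : Q, exists m : F, pi m = n by move=> n; exists (repr n); exact: pi_surj.
have [h hh] := hproj F Q (pi : {linear F -> Q}) (mkl id_lin) surj.
have inj0 z : ibf_beta mul beta z = 0 -> z = 0.
  move=> hz.
  have hz0 : h z = 0.
    apply/eqP/freeg_eqP => q; rewrite coeff0.
    have cl : linear (fun w : Q => coeff q (h w) : R^o).
      by move=> c u v; rewrite linearP coeffD coeffZ.
    have [r hr] := key (mkl cl).
    by have := hr z; rewrite /mkl hz mulr0.
  by rewrite -[z]hh hz0 raddf0.
have inj : injective (ibf_beta mul beta).
  move=> z1 z2 e; apply/eqP; rewrite -subr_eq0; apply/eqP; apply: inj0.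
  have := part2 (-1) z2 z1; rewrite scaleN1r (addrC (- z2)) => ->.
  by rewrite e scaleN1r addNr.
have sur (s : R^o) : exists z : Q, ibf_beta mul beta z = s.
  have [l ->] := hspan s.
  exists (\sum_(t <- l) t.1 *: ibf_class mul t.2.1 t.2.2).
  change (mkl part2 (\sum_(t <- l) t.1 *: ibf_class mul t.2.1 t.2.2) = \sum_(t <- l) t.1 * beta t.2.1 t.2.2).
  rewrite raddf_sum; apply: eq_bigr => t _.
  transitivity (t.1 * ibf_beta mul beta (ibf_class mul t.2.1 t.2.2)); last by rewrite part1.
  exact: (linearZZ (mkl part2)).
pose g (s : R^o) := proj1_sig (constructive_indefinite_description _ (sur s)).
have gK s : ibf_beta mul beta (g s) = s := proj2_sig (constructive_indefinite_description _ (sur s)).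
exists g => [z|s]; last exact: gK.
by apply: inj; rewrite gK.
Qed.

End Main.

Theorem proposition3p9 (R : comNzRingType) (B : lmodType R) (mul : B -> B -> B)
    (beta : B -> B -> R^o) :
  bilinear_map mul ->
  central_algebra mul ->
  bilinear_map beta ->
  invariant_form mul beta ->
  nonsingular_form beta ->
  form_values_span_R beta ->
  projective_module (IBF mul) ->
  (forall x y : B, ibf_beta mul beta (ibf_class mul x y) = beta x y) /\
  linear (ibf_beta mul beta : IBF mul -> R^o) /\
  bijective (ibf_beta mul beta).
Proof.
move=> _ hcent hbeta hinv hns hspan hproj.
split; first exact: part1.
split; first exact: part2.
exact: part3.
Qed.
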